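(* Let $p=(p_1,\dots,p_n)$ be a probability distribution, $m\ge 2$, $\delta>0$, $\eta>0$, and $\varphi_j=2^{-j}$ for $j\ge 0$. For $j=1,\dots,m$ let $\beta_j,\beta_j':[0,1]\to\mathbb{R}$ satisfy, for all $x\in[0,1]$: $\beta_j(x)^2+\beta_j'(x)^2=1$; $\beta_j(x)^2\le\delta^2$ whenever $0\le x\le\varphi_j$; and $\beta_j(x)^2\ge 1-\delta^2$ whenever $2\varphi_j\le x\le 1$. Let $B_j'(x)=\prod_{i=1}^j\beta_i'(x)$ ($B_0'\equiv1$) and $B_j(x)=B_{j-1}'(x)\beta_j(x)$. For $k=1,\dots,m$ let $S_k$ be a real even polynomial with $|S_k(x)|\le 1$ for all $x\in[-1,1]$ and $$\left|S_k(x)-\frac{\sqrt{\log(2/x)}}{2\sqrt{\log(1/\varphi_{k+1})}}\right|\le\eta\quad\text{for all }x\in[\varphi_k,1].$$ Define $v_k=\sum_{i=1}^n p_i S_k(\sqrt{p_i})^2B_k(\sqrt{p_i})^2\log\frac{1}{\varphi_{k+1}}$ and $v=-2+\sum_{k=1}^m 8v_k$. Then $$|v-H(p)|=\tilde{\mathcal{O}}\!\left(m\delta^2+\eta+\frac{n}{2^m}\right),$$ where $H(p)=-\sum_i p_i\log p_i$.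
   Context: All logarithms are base 2. $\tilde{\mathcal{O}}$ hides constant and polylogarithmic factors. *)

(* Defs.v *)
From Stdlib Require Import Reals Lra List.
Open Scope R_scope.

Definition log2 (x : R) : R := ln x / ln 2.

Definition phi (j : nat) : R := / (2 ^ j).

Fixpoint sumR (n : nat) (f : nat -> R) : R :=
  match n with O => 0 | S k => sumR k f + f k end.

Fixpoint prod1 (j : nat) (f : nat -> R) : R :=
  match j with O => 1 | S k => prod1 k f * f (S k) end.

Definition prob_dist (n : nat) (p : nat -> R) : Prop :=
  (forall i, (i < n)%nat -> 0 <= p i) /\ sumR n p = 1.

(* Shannon entropy (base 2), with the convention 0 log 0 = 0 *)
Definition xlog2x (x : R) : R := if Rlt_dec 0 x then x * log2 x else 0.
Definition entropy (n : nat) (p : nat -> R) : R := - sumR n (fun i => xlog2x (p i)).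

(* real polynomials: evaluation of coefficient list c_0 + c_1 x + ... *)
Fixpoint peval (c : list R) (x : R) : R :=
  match c with nil => 0 | a :: c' => a + x * peval c' x end.
Definition is_poly (f : R -> R) : Prop := exists c, forall x, f x = peval c x.
Definition is_even_poly (f : R -> R) : Prop :=
  is_poly f /\ forall x, f (- x) = f x.

Definition Bp (beta' : nat -> R -> R) (j : nat) (x : R) : R :=
  prod1 j (fun i => beta' i x).
Definition Bf (beta beta' : nat -> R -> R) (j : nat) (x : R) : R :=
  Bp beta' (j - 1) x * beta j x.

Definition v_k (n : nat) (p : nat -> R) (Sp beta beta' : nat -> R -> R) (k : nat) : R :=
  sumR n (fun i => p i * (Sp k (sqrt (p i)))^2 * (Bf beta beta' k (sqrt (p i)))^2
                   * log2 (/ phi (k + 1))).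

Definition v_est (n m : nat) (p : nat -> R) (Sp beta beta' : nat -> R -> R) : R :=
  -2 + sumR m (fun k => 8 * v_k n p Sp beta beta' (S k)).

Definition beta_hyp (m : nat) (delta : R) (beta beta' : nat -> R -> R) : Prop :=
  forall j, (1 <= j <= m)%nat -> forall x, 0 <= x <= 1 ->
    (beta j x)^2 + (beta' j x)^2 = 1 /\
    (x <= phi j -> (beta j x)^2 <= delta^2) /\
    (2 * phi j <= x -> (beta j x)^2 >= 1 - delta^2).

Definition S_hyp (m : nat) (eta : R) (S : nat -> R -> R) : Prop :=
  forall k, (1 <= k <= m)%nat ->
    is_even_poly (S k) /\
    (forall x, -1 <= x <= 1 -> Rabs (S k x) <= 1) /\
    (forall x, phi k <= x <= 1 ->
       Rabs (S k x - sqrt (log2 (2 / x)) / (2 * sqrt (log2 (/ phi (k + 1))))) <= eta).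

(* Main.v *)
Require Import Defs.
From Stdlib Require Import Reals Lra Lia List.
Open Scope R_scope.

Lemma ln2_pos : 0 < ln 2.
Proof. generalize ln_lt_2; lra. Qed.

Lemma ln_le' x y : 0 < x -> x <= y -> ln x <= ln y.
Proof. intros Hx [H|H]. left; apply ln_increasing; auto. subst; lra. Qed.

Lemma ln_lt_self y : 0 < y -> ln y < y.
Proof. intros Hy. generalize (exp_ineq1_le (ln y)). rewrite exp_ln; auto. lra. Qed.

Lemma ln_pow2 k : ln (2 ^ k) = INR k * ln 2.
Proof. apply ln_pow; lra. Qed.

Lemma pow2_pos k : 0 < 2 ^ k.
Proof. apply pow_lt; lra. Qed.

Lemma log2_invphi j : log2 (/ phi j) = INR j.
Proof. unfold log2, phi. rewrite Rinv_inv, ln_pow2. field. generalize ln2_pos; lra. Qed.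

Lemma log2_pow2 j : log2 (2 ^ j) = INR j.
Proof. unfold log2. rewrite ln_pow2. field. generalize ln2_pos; lra. Qed.

Lemma log2_2x x : 0 < x -> log2 (2 / x) = 1 - ln x / ln 2.
Proof. intros Hx. unfold log2, Rdiv. rewrite ln_mult, ln_Rinv; try lra.
  field. generalize ln2_pos; lra. apply Rinv_0_lt_compat; auto. Qed.

Lemma sumR_ext n f g : (forall i, (i < n)%nat -> f i = g i) -> sumR n f = sumR n g.
Proof. induction n; simpl; intros H; auto. rewrite IHn, H; auto. Qed.

Lemma sumR_le n f g : (forall i, (i < n)%nat -> f i <= g i) -> sumR n f <= sumR n g.
Proof. induction n; simpl; intros H. lra. apply Rplus_le_compat; auto. Qed.

Lemma sumR_abs n f : Rabs (sumR n f) <= sumR n (fun i => Rabs (f i)).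
Proof. induction n; simpl. rewrite Rabs_R0; lra.
  eapply Rle_trans. apply Rabs_triang. lra. Qed.

Lemma sumR_const n c : sumR n (fun _ => c) = INR n * c.
Proof. induction n; simpl sumR. simpl; lra. rewrite IHn, S_INR; lra. Qed.

Lemma sumR_scal n c f : sumR n (fun i => c * f i) = c * sumR n f.
Proof. induction n; simpl. lra. rewrite IHn; lra. Qed.

Lemma sumR_swap n m (f : nat -> nat -> R) :
  sumR n (fun i => sumR m (fun k => f i k)) = sumR m (fun k => sumR n (fun i => f i k)).
Proof. revert m; induction n; intros m; simpl.
  - induction m; simpl; lra.
  - rewrite IHn. clear IHn. induction m; simpl. lra. rewrite <- IHm. lra. Qed.

Lemma sumR_lin3 n f g h :
  sumR n (fun i => f i - 2 * g i + h i) = sumR n f - 2 * sumR n g + sumR n h.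
Proof. induction n; simpl. lra. rewrite IHn; lra. Qed.

Lemma sumR_lin2 n f g h c : (forall i, (i < n)%nat -> f i = g i + c * h i) ->
  sumR n f = sumR n g + c * sumR n h.
Proof. induction n; simpl; intros H. lra. rewrite IHn, H; auto. lra. Qed.

Lemma sumR_nonneg n f : (forall i, (i < n)%nat -> 0 <= f i) -> 0 <= sumR n f.
Proof. induction n; simpl; intros H. lra. generalize (H n (Nat.lt_succ_diag_r n)). 
  generalize (IHn (fun i Hi => H i (Nat.lt_lt_succ_r _ _ Hi))). lra. Qed.

Lemma sumR_term n f i : (forall j, (j < n)%nat -> 0 <= f j) -> (i < n)%nat -> f i <= sumR n f.
Proof. induction n; simpl; intros H Hi. lia.
  destruct (Nat.eq_dec i n). subst. 
  generalize (sumR_nonneg n f (fun j Hj => H j (Nat.lt_lt_succ_r _ _ Hj))); lra.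
  generalize (IHn (fun j Hj => H j (Nat.lt_lt_succ_r _ _ Hj)) ltac:(lia)). generalize (H n ltac:(lia)). lra. Qed.

Section B.
Variables (m : nat) (delta : R) (beta beta' : nat -> R -> R) (x : R).
Hypothesis Hb : beta_hyp m delta beta beta'.
Hypothesis Hx : 0 <= x <= 1.

Lemma beta_sq j : (1 <= j <= m)%nat -> 0 <= beta j x ^ 2 <= 1 /\ 0 <= beta' j x ^ 2 <= 1
  /\ beta' j x ^ 2 = 1 - beta j x ^ 2.
Proof. intros Hj. destruct (Hb j Hj x Hx) as [H _].
  assert (0 <= beta j x ^ 2) by (apply pow2_ge_0).
  assert (0 <= beta' j x ^ 2) by (apply pow2_ge_0). lra. Qed.

Lemma Bp_sq j : (j <= m)%nat -> 0 <= Bp beta' j x ^ 2 <= 1.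
Proof. induction j; intros Hj. unfold Bp; simpl; lra.
  unfold Bp; simpl prod1. fold (Bp beta' j x). rewrite Rpow_mult_distr.
  destruct (IHj ltac:(lia)). destruct (beta_sq (S j) ltac:(lia)) as [_ [Hq _]].
  split. apply Rmult_le_pos; lra.
  rewrite <- (Rmult_1_r 1). apply Rmult_le_compat; lra. Qed.

Lemma Bf_sq k : (1 <= k <= m)%nat -> 0 <= Bf beta beta' k x ^ 2 <= beta k x ^ 2.
Proof. intros Hk. unfold Bf. rewrite Rpow_mult_distr.
  destruct (Bp_sq (k - 1) ltac:(lia)). destruct (beta_sq k Hk) as [Hq _].
  split. apply Rmult_le_pos; lra.
  rewrite <- (Rmult_1_l (beta k x ^ 2)) at 2. apply Rmult_le_compat_r; lra. Qed.

Lemma Bf_sq1 k : (1 <= k <= m)%nat -> 0 <= Bf beta beta' k x ^ 2 <= 1.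
Proof. intros Hk. destruct (Bf_sq k Hk). destruct (beta_sq k Hk). lra. Qed.

Lemma telescope j : (j <= m)%nat ->
  sumR j (fun k => Bf beta beta' (S k) x ^ 2) = 1 - Bp beta' j x ^ 2.
Proof. induction j; intros Hj. unfold Bp; simpl; lra.
  change (sumR j (fun k => Bf beta beta' (S k) x ^ 2) + Bf beta beta' (S j) x ^ 2 = 1 - Bp beta' (S j) x ^ 2). rewrite IHj by lia. unfold Bf. replace (S j - 1)%nat with j by lia.
  unfold Bp at 3; simpl prod1. fold (Bp beta' j x).
  rewrite !Rpow_mult_distr. destruct (beta_sq (S j) ltac:(lia)) as [_ [_ Hq]].
  rewrite Hq. ring. Qed.

Lemma Bp_j_small j : (1 <= j <= m)%nat -> 2 * phi j <= x -> Bp beta' j x ^ 2 <= delta ^ 2.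
Proof. intros Hm H. destruct j as [|m']. lia.
  unfold Bp; simpl prod1. fold (Bp beta' m' x). rewrite Rpow_mult_distr.
  destruct (Bp_sq m' ltac:(lia)). destruct (beta_sq (S m') ltac:(lia)) as [_ [H2 H3]].
  destruct (Hb (S m') ltac:(lia) x Hx) as [_ [_ H4]]. specialize (H4 H).
  assert (beta' (S m') x ^ 2 <= delta ^ 2) by lra.
  rewrite <- (Rmult_1_l (delta ^ 2)). apply Rmult_le_compat; lra. Qed.
End B.

Lemma sq_le1 a : Rabs a <= 1 -> 0 <= a ^ 2 <= 1.
Proof. intros H. rewrite <- pow2_abs. generalize (Rabs_pos a). nra. Qed.

Lemma prod_bound p x a b L K : 0 <= p <= x -> 0 <= a <= 1 -> 0 <= b <= 1 -> 0 <= L <= K ->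
  0 <= 8 * (p * a * b * L) <= 8 * x * K.
Proof. intros. assert (0 <= p * a <= p) by nra. assert (0 <= p * a * b <= p) by nra.
  assert (0 <= p * a * b * L <= x * K) by nra. lra. Qed.

Lemma xlog_small x : 0 <= x <= 1 -> Rabs (xlog2x (x ^ 2)) <= 4 * x.
Proof. intros Hx. unfold xlog2x. destruct (Rlt_dec 0 (x ^ 2)) as [Hp|Hp].
  - assert (Hx0 : 0 < x). { destruct (Req_dec x 0). subst. simpl in Hp; lra. lra. }
    unfold log2. replace (x ^ 2) with (x * x) by ring. rewrite ln_mult by lra.
    assert (lx0 : ln x <= 0). { rewrite <- ln_1. apply ln_le'; lra. }
    assert (Hu : - ln x < / x). { rewrite <- ln_Rinv by lra. apply ln_lt_self. apply Rinv_0_lt_compat; lra. }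
    assert (Hxu : x * (- ln x) <= 1). { assert (x * - ln x < x * / x) by (apply Rmult_lt_compat_l; lra).
      rewrite Rinv_r in H; lra. }
    generalize ln_lt_2; intros L2.
    replace (x * x * ((ln x + ln x) / ln 2)) with (- (2 * x * (x * - ln x) / ln 2)) by (field; lra).
    rewrite Rabs_Ropp. rewrite Rabs_right.
    + apply Rmult_le_reg_r with (ln 2). lra. unfold Rdiv. rewrite Rmult_assoc, Rinv_l by lra. nra.
    + apply Rle_ge. unfold Rdiv. apply Rmult_le_pos. nra. left; apply Rinv_0_lt_compat; lra.
  - rewrite Rabs_R0; lra. Qed.

Lemma core m delta eta beta beta' Sp p x :
  (2 <= m)%nat -> 0 < eta -> beta_hyp m delta beta beta' -> S_hyp m eta Sp ->
  0 <= x <= 1 -> p = x ^ 2 ->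
  Rabs (sumR m (fun k => 8 * (p * Sp (S k) x ^ 2 * Bf beta beta' (S k) x ^ 2 * log2 (/ phi (S k + 1))))
        - 2 * p + xlog2x p)
  <= p * (18 * (INR m + 1) ^ 2 * (eta + INR m * delta ^ 2)) + 16 * (INR m + 1) ^ 2 / 2 ^ m.
Proof.
  intros Hm Heta Hb HS Hx Hp.
  assert (HM : 2 <= INR m) by (replace 2 with (INR 2) by (simpl; lra); apply le_INR; lia).
  set (M := INR m) in *.
  assert (Hq : 0 < / 2 ^ m) by (apply Rinv_0_lt_compat, pow2_pos).
  assert (HA : 0 <= p * (18 * (M + 1) ^ 2 * (eta + M * delta ^ 2))).
  { rewrite Hp. apply Rmult_le_pos. nra. apply Rmult_le_pos. nra.
    assert (0 <= delta ^ 2) by apply pow2_ge_0. nra. }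
  assert (Hpx : 0 <= p <= x) by (rewrite Hp; nra).
  assert (HSk : forall k, (k < m)%nat -> 0 <= Sp (S k) x ^ 2 <= 1).
  { intros k Hk. apply sq_le1. apply (HS (S k) ltac:(lia)). lra. }
  assert (HK : forall k, (k < m)%nat -> 2 <= log2 (/ phi (S k + 1)) <= M + 1).
  { intros k Hk. rewrite log2_invphi. rewrite plus_INR, S_INR. simpl INR.
    assert (INR k + 1 <= M) by (rewrite <- S_INR; apply le_INR; lia).
    generalize (pos_INR k). lra. }
  destruct (Rlt_le_dec x (2 * phi m)) as [Hsm|Hbig].
  -
    unfold phi in Hsm.
    assert (Hs : 0 <= sumR m (fun k => 8 * (p * Sp (S k) x ^ 2 * Bf beta beta' (S k) x ^ 2 * log2 (/ phi (S k + 1))))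
                 <= sumR m (fun _ => 8 * x * (M + 1))).
    { split. apply sumR_nonneg. intros k Hk.
      apply (prod_bound p x _ _ _ (M + 1)); auto. apply Bf_sq1 with m delta; auto; lia.
      generalize (HK k Hk); lra.
      apply sumR_le. intros k Hk.
      apply (prod_bound p x _ _ _ (M + 1)); auto. apply Bf_sq1 with m delta; auto; lia.
      generalize (HK k Hk); lra. }
    rewrite sumR_const in Hs. fold M in Hs.
    assert (Hl := xlog_small x Hx). rewrite <- Hp in Hl.
    eapply Rle_trans. apply Rabs_triang. eapply Rle_trans. apply Rplus_le_compat_r. apply Rabs_triang.
    rewrite Rabs_right by lra.
    replace (Rabs (- (2 * p))) with (2 * p) by (rewrite Rabs_Ropp, Rabs_right; lra).
    assert (x * (8 * M * (M + 1) + 6) <= 16 * (M + 1) ^ 2 / 2 ^ m).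
    { unfold Rdiv. assert (x * (8 * M * (M + 1) + 6) <= 2 * / 2 ^ m * (8 * M * (M + 1) + 6)).
      apply Rmult_le_compat_r; nra. nra. }
    nra.
  -
    assert (Hx0 : 0 < x). { unfold phi in Hbig. lra. }
    generalize ln2_pos; intros L2.
    set (l := 1 - ln x / ln 2).
    assert (Hl1 : 1 <= l).
    { assert (ln x <= 0) by (rewrite <- ln_1; apply ln_le'; lra).
      unfold l. assert (ln x / ln 2 <= 0). unfold Rdiv.
      assert (0 < / ln 2) by (apply Rinv_0_lt_compat; lra). nra. lra. }
    assert (HlK : forall j, / 2 ^ j <= x -> l <= INR j + 1).
    { intros j Hj. apply ln_le' in Hj. rewrite ln_Rinv, ln_pow2 in Hj by apply pow2_pos.
      unfold l. assert (- INR j <= ln x / ln 2). { apply Rmult_le_reg_r with (ln 2). lra.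
        unfold Rdiv; rewrite Rmult_assoc, Rinv_l; lra. } lra.
      apply Rinv_0_lt_compat, pow2_pos. }
    assert (HlM : l <= M).
    { destruct m as [|m']. lia. unfold phi in Hbig. 
      assert (/ 2 ^ m' <= x). { simpl pow in Hbig. rewrite Rinv_mult in Hbig. 
        replace (2 * (/ 2 * / 2 ^ m')) with (/ 2 ^ m') in Hbig by (field; apply pow_nonzero; lra). lra. }
      apply HlK in H. unfold M. rewrite S_INR. lra. }
    assert (Hxl : xlog2x p = 2 * p - 2 * p * l).
    { unfold xlog2x. destruct (Rlt_dec 0 p). unfold log2, l. rewrite Hp.
      replace (x ^ 2) with (x * x) by ring. rewrite ln_mult by lra. field. lra.
      exfalso. rewrite Hp in n. nra. }
    rewrite Hxl.
    rewrite (sumR_lin2 m _ (fun k => 8 * p * Bf beta beta' (S k) x ^ 2 *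
                 (Sp (S k) x ^ 2 * log2 (/ phi (S k + 1)) - l / 4))
              (fun k => Bf beta beta' (S k) x ^ 2) (2 * p * l)).
    2:{ intros. cbv beta. field. }
    rewrite (telescope m delta beta beta' x Hb Hx m (le_n m)).
    set (G := sumR m _).
    replace (G + 2 * p * l * (1 - Bp beta' m x ^ 2) - 2 * p + (2 * p - 2 * p * l))
      with (G - 2 * p * l * Bp beta' m x ^ 2) by ring.
    assert (HBm : 0 <= Bp beta' m x ^ 2 <= delta ^ 2).
    { split. apply pow2_ge_0. apply (Bp_j_small m delta beta beta' x Hb Hx m). lia. exact Hbig. }
    assert (HG : Rabs G <= M * (8 * p * (2 * (M + 1) * (eta + delta ^ 2)))).
    { unfold G. eapply Rle_trans. apply sumR_abs. unfold M at 1. rewrite <- sumR_const. apply sumR_le.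
      intros k Hk. rewrite Rabs_mult. rewrite (Rabs_right (8 * p * _)).
      2:{ apply Rle_ge. apply Rmult_le_pos. lra. apply pow2_ge_0. }
      rewrite Rmult_assoc. apply Rmult_le_compat_l. lra.
      destruct (Bf_sq m delta beta beta' x Hb Hx (S k) ltac:(lia)) as [Bf0 Bfb].
      destruct (Bf_sq1 m delta beta beta' x Hb Hx (S k) ltac:(lia)) as [_ Bf1].
      destruct (HK k Hk) as [K2 KM].
      set (K := log2 (/ phi (S k + 1))) in *.
      assert (0 <= delta ^ 2) by apply pow2_ge_0.
      destruct (Rle_lt_dec (phi (S k)) x) as [Hge|Hlt].
      + destruct (HS (S k) ltac:(lia)) as [_ [Hab Happ]].
        specialize (Happ x (conj Hge (proj2 Hx))). specialize (Hab x ltac:(lra)).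
        rewrite log2_2x in Happ by lra. fold K l in Happ.
        set (t := sqrt l / (2 * sqrt K)) in *.
        assert (Ht0 : 0 <= t). { unfold t. apply Rmult_le_pos. apply sqrt_pos.
          left; apply Rinv_0_lt_compat. generalize (sqrt_lt_R0 K ltac:(lra)); lra. }
        assert (Ht2 : l / 4 = K * t ^ 2).
        { unfold t. unfold Rdiv. rewrite Rpow_mult_distr, pow_inv, Rpow_mult_distr, !pow2_sqrt by lra.
          field. lra. }
        assert (HlK' : l <= K). { unfold K. rewrite log2_invphi, plus_INR. apply HlK. exact Hge. }
        assert (Ht1 : t <= 1 / 2). { assert (t ^ 2 <= 1/4). { apply Rmult_le_reg_l with K. lra. lra. } nra. }
        rewrite Ht2.
        replace (Sp (S k) x ^ 2 * K - K * t ^ 2) with (K * ((Sp (S k) x - t) * (Sp (S k) x + t))) by ring.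
        rewrite !Rabs_mult, (Rabs_right K) by lra.
        assert (Rabs (Sp (S k) x + t) <= 3 / 2).
        { eapply Rle_trans. apply Rabs_triang. rewrite (Rabs_right t); lra. }
        assert (0 <= Rabs (Sp (S k) x - t) * Rabs (Sp (S k) x + t) <= eta * (3/2)).
        { split. apply Rmult_le_pos; apply Rabs_pos. apply Rmult_le_compat; try apply Rabs_pos; lra. }
        assert (0 <= K * (Rabs (Sp (S k) x - t) * Rabs (Sp (S k) x + t)) <= (M + 1) * (eta * (3 / 2))).
        { split. apply Rmult_le_pos; lra. apply Rmult_le_compat; lra. }
        rewrite <- Rmult_assoc in *. nra.
      + destruct (Hb (S k) ltac:(lia) x Hx) as [_ [Hs _]]. specialize (Hs (Rlt_le _ _ Hlt)).
        destruct (HSk k Hk).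
        assert (Rabs (Sp (S k) x ^ 2 * K - l / 4) <= 2 * (M + 1)).
        { apply Rabs_le. split; nra. }
        assert (Bf beta beta' (S k) x ^ 2 * Rabs (Sp (S k) x ^ 2 * K - l / 4) <= delta ^ 2 * (2 * (M + 1))).
        { apply Rmult_le_compat; try lra. apply Rabs_pos. }
        nra. }
    eapply Rle_trans. apply Rabs_triang. rewrite Rabs_Ropp.
    rewrite (Rabs_right (2 * p * l * _)).
    2:{ apply Rle_ge. apply Rmult_le_pos. nra. lra. }
    assert (2 * p * l * Bp beta' m x ^ 2 <= 2 * p * M * delta ^ 2).
    { assert (0 <= 2 * p * l <= 2 * p * M) by nra.
      rewrite Rmult_assoc. rewrite (Rmult_assoc (2 * p) M). apply Rmult_le_compat; nra. }
    assert (0 <= 16 * (M + 1) ^ 2 / 2 ^ m).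
    { unfold Rdiv. apply Rmult_le_pos. nra. lra. }
    assert (0 <= delta ^ 2) by apply pow2_ge_0.
    assert (M * (8 * p * (2 * (M + 1) * (eta + delta ^ 2))) + 2 * p * M * delta ^ 2
            <= p * (18 * (M + 1) ^ 2 * (eta + M * delta ^ 2))).
    { assert (E1 : 16 * M * (M + 1) <= 18 * (M + 1) ^ 2) by nra.
      assert (E2 : 16 * M * (M + 1) + 2 * M <= 18 * (M + 1) ^ 2 * M) by nra.
      assert (p * eta * (16 * M * (M + 1)) <= p * eta * (18 * (M + 1) ^ 2)).
      { apply Rmult_le_compat_l. nra. lra. }
      assert (p * delta ^ 2 * (16 * M * (M + 1) + 2 * M) <= p * delta ^ 2 * (18 * (M + 1) ^ 2 * M)).
      { apply Rmult_le_compat_l. nra. lra. }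
      nra. }
    lra.
Qed.

Theorem theorem3 :
  exists (C : R) (c : nat), 0 < C /\
  forall (n : nat) (p : nat -> R) (m : nat) (delta eta : R)
         (beta beta' S : nat -> R -> R),
    (1 <= n)%nat -> prob_dist n p -> (2 <= m)%nat -> 0 < delta -> 0 < eta ->
    beta_hyp m delta beta beta' ->
    S_hyp m eta S ->
    Rabs (v_est n m p S beta beta' - entropy n p)
      <= C * (INR m + log2 (INR n + 1)) ^ c
           * (INR m * delta ^ 2 + eta + INR n / 2 ^ m).
Proof.
  exists 18, 2%nat. split; [lra|].
  intros n p m delta eta beta beta' Sf Hn [Hp0 Hp1] Hm Hd He Hb HS.
  set (F := fun i => sumR m (fun k => 8 * (p i * Sf (Datatypes.S k) (sqrt (p i)) ^ 2
             * Bf beta beta' (Datatypes.S k) (sqrt (p i)) ^ 2 * log2 (/ phi (Datatypes.S k + 1))))).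
  assert (Heq : v_est n m p Sf beta beta' - entropy n p
                = sumR n (fun i => F i - 2 * p i + xlog2x (p i))).
  { rewrite sumR_lin3, Hp1. unfold v_est, entropy, v_k, F.
    rewrite sumR_swap.
    rewrite (sumR_ext m (fun k => sumR n (fun i => 8 * _)) (fun k => 8 * sumR n (fun i => _)))
      by (intros; apply sumR_scal).
    ring. }
  rewrite Heq.
  set (M := INR m).
  set (A := 18 * (M + 1) ^ 2 * (eta + M * delta ^ 2)).
  set (B := 16 * (M + 1) ^ 2 / 2 ^ m).
  assert (Hle : forall i, (i < n)%nat -> 0 <= p i <= 1).
  { intros i Hi. split. auto. rewrite <- Hp1. apply sumR_term; auto. }
  assert (Hsum : Rabs (sumR n (fun i => F i - 2 * p i + xlog2x (p i))) <= A + INR n * B).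
  { eapply Rle_trans. apply sumR_abs.
    eapply Rle_trans. apply (sumR_le n _ (fun i => p i * A + B)).
    - intros i Hi. destruct (Hle i Hi).
      apply (core m delta eta beta beta' Sf (p i) (sqrt (p i))); auto.
      split. apply sqrt_pos. rewrite <- sqrt_1. apply sqrt_le_1_alt. lra.
      rewrite pow2_sqrt; auto.
    - rewrite (sumR_lin2 n _ (fun _ => B) p A) by (intros; ring).
      rewrite sumR_const, Hp1. lra. }
  eapply Rle_trans. apply Hsum.
  assert (HM : 2 <= M) by (unfold M; replace 2 with (INR 2) by (simpl; lra); apply le_INR; lia).
  assert (Hlog : 1 <= log2 (INR n + 1)).
  { unfold log2. assert (1 <= INR n) by (replace 1 with (INR 1) by reflexivity; apply le_INR; lia).
    generalize ln2_pos; intro.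
    assert (ln 2 <= ln (INR n + 1)) by (apply ln_le'; lra).
    apply Rmult_le_reg_r with (ln 2). lra. unfold Rdiv. rewrite Rmult_assoc, Rinv_l; lra. }
  assert (Hq : 0 < / 2 ^ m) by (apply Rinv_0_lt_compat, pow2_pos).
  assert (0 <= delta ^ 2) by apply pow2_ge_0.
  assert (0 <= INR n) by apply pos_INR.
  set (W := M + log2 (INR n + 1)).
  assert (HW : 0 <= (M + 1) ^ 2 <= W ^ 2) by (unfold W; nra).
  assert (Hpos : 0 <= M * delta ^ 2 + eta + INR n / 2 ^ m).
  { unfold Rdiv. assert (0 <= INR n * / 2 ^ m) by nra. nra. }
  assert (A + INR n * B <= 18 * (M + 1) ^ 2 * (M * delta ^ 2 + eta + INR n / 2 ^ m)).
  { unfold A, B, Rdiv. assert (0 <= INR n * / 2 ^ m) by nra. nra. }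
  assert (18 * (M + 1) ^ 2 * (M * delta ^ 2 + eta + INR n / 2 ^ m)
          <= 18 * W ^ 2 * (M * delta ^ 2 + eta + INR n / 2 ^ m)).
  { apply Rmult_le_compat_r. lra. lra. }
  lra.
Qed.
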